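(* Let $\mathcal{A}\in\mathbb{R}^{l\times m\times n}$ and let $U_0\in\mathbb{R}^{l\times r_1}$, $V_0\in\mathbb{R}^{m\times r_2}$, $W_0\in\mathbb{R}^{n\times r_3}$ have orthonormal columns. Perform one block-Krylov step in each mode starting from $(U_0,V_0,W_0)$, giving $(U_1,V_1,W_1)$, and set \[ \mathcal{H}_0=\mathcal{A}\cdot(U_0,V_0,W_0),\quad \mathcal{H}^1_1=\mathcal{A}\cdot(U_1,V_0,W_0),\quad \mathcal{H}^2_1=\mathcal{A}\cdot(U_0,V_1,W_0),\quad \mathcal{H}^3_1=\mathcal{A}\cdot(U_0,V_0,W_1). \] Then the norm of the Grassmann gradient of $\Phi(U,V,W)=\|\mathcal{A}\cdot(U,V,W)\|^2$ at $(U_0,V_0,W_0)$ satisfies \[ \|\nabla(U_0,V_0,W_0)\|^2=\|\langle\mathcal{H}_0,\mathcal{H}^1_1\rangle_{-1}\|^2+\|\langle\mathcal{H}_0,\mathcal{H}^2_1\rangle_{-2}\|^2+\|\langle\mathcal{H}_0,\mathcal{H}^3_1\rangle_{-3}\|^2 . \]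
   Context: For $\mathcal{A}\in\mathbb{R}^{l\times m\times n}$ and matrices $U,V,W$ of compatible row dimensions, $\mathcal{A}\cdot(U,V,W)$ is the tensor with entries $\sum_{\alpha,\beta,\gamma}u_{\alpha i}v_{\beta j}w_{\gamma k}a_{\alpha\beta\gamma}$; $\mathcal{A}\cdot_{2,3}(V,W)$ is the analogous product in modes 2 and 3 only. Norms are Frobenius norms. Partial contractions: $\langle\mathcal{X},\mathcal{Y}\rangle_{-1}$ is the matrix with entries $\sum_{j,k}x_{ijk}y_{i'jk}$ (contraction over modes 2 and 3), and $\langle\cdot,\cdot\rangle_{-2}$, $\langle\cdot,\cdot\rangle_{-3}$ are defined analogously (contraction over all modes except mode 2, resp. mode 3). The mode-1 block-Krylov step from $(U_0,V_0,W_0)$ produces $U_1$ with orthonormal columns orthogonal to $U_0$ via a thin QR decomposition $(I-U_0U_0^T)\,\mathtt{unfold}_1(\mathcal{A}\cdot_{2,3}(V_0,W_0))=U_1H$, where $\mathtt{unfold}_1$ arranges the mode-1 fibers as columns; the mode-2 and mode-3 steps producing $V_1,W_1$ are analogous. The Grassmann gradient of $\Phi$ at $(U,V,W)$ (maximization over the product of Grassmann manifolds of the column spaces of $U,V,W$) is, in local coordinates, $(\langle\mathcal{F}^1_\perp,\mathcal{F}\rangle_{-1},\langle\mathcal{F}^2_\perp,\mathcal{F}\rangle_{-2},\langle\mathcal{F}^3_\perp,\mathcal{F}\rangle_{-3})$, where $\mathcal{F}=\mathcal{A}\cdot(U,V,W)$, $\mathcal{F}^1_\perp=\mathcal{A}\cdot(U_\perp,V,W)$,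 $\mathcal{F}^2_\perp=\mathcal{A}\cdot(U,V_\perp,W)$, $\mathcal{F}^3_\perp=\mathcal{A}\cdot(U,V,W_\perp)$, with $(U\,U_\perp)$ etc. square orthogonal matrices; its squared norm is the sum of squared Frobenius norms of the three components. *)

(* Defs.v *)
From mathcomp Require Import all_boot all_order all_algebra.
Set Implicit Arguments. Unset Strict Implicit. Unset Printing Implicit Defensive.
Import Order.TTheory GRing.Theory Num.Theory.
Local Open Scope ring_scope.

Section Defs.
Variable R : realFieldType.

Definition tensor (l m n : nat) := 'I_l -> 'I_m -> 'I_n -> R.

Definition tmul l m n p q s (A : tensor l m n)
  (U : 'M[R]_(l, p)) (V : 'M[R]_(m, q)) (W : 'M[R]_(n, s)) : tensor p q s :=
  fun i j k => \sum_(a < l) \sum_(b < m) \sum_(c < n) U a i * V b j * W c k * A a b c.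

Definition tmul23 l m n q s (A : tensor l m n) (V : 'M[R]_(m, q)) (W : 'M[R]_(n, s))
  : tensor l q s :=
  fun i j k => \sum_(b < m) \sum_(c < n) V b j * W c k * A i b c.
Definition tmul13 l m n p s (A : tensor l m n) (U : 'M[R]_(l, p)) (W : 'M[R]_(n, s))
  : tensor p m s :=
  fun i j k => \sum_(a < l) \sum_(c < n) U a i * W c k * A a j c.
Definition tmul12 l m n p q (A : tensor l m n) (U : 'M[R]_(l, p)) (V : 'M[R]_(m, q))
  : tensor p q n :=
  fun i j k => \sum_(a < l) \sum_(b < m) U a i * V b j * A a b k.

(* mode-k unfoldings: the mode-k fibers become the columns
   (columns ordered by mxvec of the remaining two indices) *)
Definition unfold1 p q s (X : tensor p q s) : 'M[R]_(p, q * s) :=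
  \matrix_(i < p) mxvec (\matrix_(j < q, k < s) X i j k).
Definition unfold2 p q s (X : tensor p q s) : 'M[R]_(q, p * s) :=
  \matrix_(j < q) mxvec (\matrix_(i < p, k < s) X i j k).
Definition unfold3 p q s (X : tensor p q s) : 'M[R]_(s, p * q) :=
  \matrix_(k < s) mxvec (\matrix_(i < p, j < q) X i j k).

Definition pcontr1 p p' q s (X : tensor p q s) (Y : tensor p' q s) : 'M[R]_(p, p') :=
  \matrix_(i, i') \sum_(j < q) \sum_(k < s) X i j k * Y i' j k.
Definition pcontr2 p q q' s (X : tensor p q s) (Y : tensor p q' s) : 'M[R]_(q, q') :=
  \matrix_(j, j') \sum_(i < p) \sum_(k < s) X i j k * Y i j' k.
Definition pcontr3 p q s s' (X : tensor p q s) (Y : tensor p q s') : 'M[R]_(s, s') :=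
  \matrix_(k, k') \sum_(i < p) \sum_(j < q) X i j k * Y i j k'.

Definition fnorm2 a b (M : 'M[R]_(a, b)) : R := \sum_(i < a) \sum_(j < b) M i j ^+ 2.

Definition orthonormal_cols a b (M : 'M[R]_(a, b)) : Prop := M^T *m M = 1%:M.

(* (U Uperp) is a square orthogonal matrix *)
Definition orth_complement a b c (U : 'M[R]_(a, b)) (Up : 'M[R]_(a, c)) : Prop :=
  [/\ (b + c = a)%N, orthonormal_cols U, orthonormal_cols Up & U^T *m Up = 0].

Definition upper_triangular a b (H : 'M[R]_(a, b)) : Prop :=
  forall (i : 'I_a) (j : 'I_b), (j < i)%N -> H i j = 0.

Definition thin_QR a b c (X : 'M[R]_(a, b)) (Q : 'M[R]_(a, c)) (H : 'M[R]_(c, b)) : Prop :=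
  [/\ orthonormal_cols Q, upper_triangular H & X = Q *m H].

Definition krylov_step1 l m n r1 r2 r3 p1 (A : tensor l m n)
  (U0 : 'M[R]_(l, r1)) (V0 : 'M[R]_(m, r2)) (W0 : 'M[R]_(n, r3))
  (U1 : 'M[R]_(l, p1)) (H : 'M[R]_(p1, r2 * r3)) : Prop :=
  U0^T *m U1 = 0 /\
  thin_QR ((1%:M - U0 *m U0^T) *m unfold1 (tmul23 A V0 W0)) U1 H.
Definition krylov_step2 l m n r1 r2 r3 p2 (A : tensor l m n)
  (U0 : 'M[R]_(l, r1)) (V0 : 'M[R]_(m, r2)) (W0 : 'M[R]_(n, r3))
  (V1 : 'M[R]_(m, p2)) (H : 'M[R]_(p2, r1 * r3)) : Prop :=
  V0^T *m V1 = 0 /\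
  thin_QR ((1%:M - V0 *m V0^T) *m unfold2 (tmul13 A U0 W0)) V1 H.
Definition krylov_step3 l m n r1 r2 r3 p3 (A : tensor l m n)
  (U0 : 'M[R]_(l, r1)) (V0 : 'M[R]_(m, r2)) (W0 : 'M[R]_(n, r3))
  (W1 : 'M[R]_(n, p3)) (H : 'M[R]_(p3, r1 * r2)) : Prop :=
  W0^T *m W1 = 0 /\
  thin_QR ((1%:M - W0 *m W0^T) *m unfold3 (tmul12 A U0 V0)) W1 H.

(* squared norm of the Grassmann gradient of Phi at (U,V,W), in the local
   coordinates given by the orthogonal complements Up, Vp, Wp *)
Definition grassmann_grad_sqnorm l m n r1 r2 r3 l1 m1 n1 (A : tensor l m n)
  (U : 'M[R]_(l, r1)) (V : 'M[R]_(m, r2)) (W : 'M[R]_(n, r3))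
  (Up : 'M[R]_(l, l1)) (Vp : 'M[R]_(m, m1)) (Wp : 'M[R]_(n, n1)) : R :=
  let F := tmul A U V W in
  fnorm2 (pcontr1 (tmul A Up V W) F) + fnorm2 (pcontr2 (tmul A U Vp W) F)
  + fnorm2 (pcontr3 (tmul A U V Wp) F).

End Defs.

(* Main.v *)
Require Import Defs.
From mathcomp Require Import all_boot all_order all_algebra ring.
Import Order.TTheory GRing.Theory Num.Theory.
Local Open Scope ring_scope.

Section T.
Variable R : realFieldType.

Lemma sum_mxvec q s (F : 'I_(q * s) -> R) :
  \sum_x F x = \sum_(j < q) \sum_(k < s) F (mxvec_index j k).
Proof.
rewrite pair_big /= (reindex (uncurry (@mxvec_index q s))) /=.
  by apply: eq_bigr => -[].
exact: (subon_bij _ (@curry_mxvec_bij _ _)).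
Qed.

Lemma unfold1E p q s (X : tensor R p q s) i j k : unfold1 X i (mxvec_index j k) = X i j k.
Proof. by rewrite /unfold1 !mxE mxvecE mxE. Qed.
Lemma unfold2E p q s (X : tensor R p q s) i j k : unfold2 X j (mxvec_index i k) = X i j k.
Proof. by rewrite /unfold2 !mxE mxvecE mxE. Qed.
Lemma unfold3E p q s (X : tensor R p q s) i j k : unfold3 X k (mxvec_index i j) = X i j k.
Proof. by rewrite /unfold3 !mxE mxvecE mxE. Qed.

Lemma pcontr1E p p' q s (X : tensor R p q s) (Y : tensor R p' q s) :
  pcontr1 X Y = unfold1 X *m (unfold1 Y)^T.
Proof.
apply/matrixP => i i'; rewrite [LHS]mxE [RHS]mxE sum_mxvec; apply: eq_bigr => j _.
by apply: eq_bigr => k _; rewrite unfold1E [_^T _ _]mxE unfold1E.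
Qed.
Lemma pcontr2E p q q' s (X : tensor R p q s) (Y : tensor R p q' s) :
  pcontr2 X Y = unfold2 X *m (unfold2 Y)^T.
Proof.
apply/matrixP => i i'; rewrite [LHS]mxE [RHS]mxE sum_mxvec; apply: eq_bigr => j _.
by apply: eq_bigr => k _; rewrite unfold2E [_^T _ _]mxE unfold2E.
Qed.
Lemma pcontr3E p q s s' (X : tensor R p q s) (Y : tensor R p q s') :
  pcontr3 X Y = unfold3 X *m (unfold3 Y)^T.
Proof.
apply/matrixP => i i'; rewrite [LHS]mxE [RHS]mxE sum_mxvec; apply: eq_bigr => j _.
by apply: eq_bigr => k _; rewrite unfold3E [_^T _ _]mxE unfold3E.
Qed.

Lemma unfold1_tmul l m n p q s (A : tensor R l m n) (U : 'M[R]_(l, p))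
  (V : 'M[R]_(m, q)) (W : 'M[R]_(n, s)) :
  unfold1 (tmul A U V W) = U^T *m unfold1 (tmul23 A V W).
Proof.
apply/matrixP => i x; case/mxvec_indexP: x => j k.
rewrite unfold1E !mxE /tmul. apply: eq_bigr => a _.
rewrite mxE unfold1E /tmul23 mulr_sumr; apply: eq_bigr => b _.
rewrite mulr_sumr; by apply: eq_bigr => c _; rewrite !mulrA.
Qed.

Lemma unfold2_tmul l m n p q s (A : tensor R l m n) (U : 'M[R]_(l, p))
  (V : 'M[R]_(m, q)) (W : 'M[R]_(n, s)) :
  unfold2 (tmul A U V W) = V^T *m unfold2 (tmul13 A U W).
Proof.
apply/matrixP => j x; case/mxvec_indexP: x => i k.
rewrite unfold2E !mxE /tmul.
under [RHS]eq_bigr => b _ do rewrite mxE unfold2E /tmul13 mulr_sumr.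
rewrite exchange_big /=; apply: eq_bigr => a _; apply: eq_bigr => b _.
rewrite mulr_sumr; apply: eq_bigr => c _.
by ring.
Qed.

Lemma unfold3_tmul l m n p q s (A : tensor R l m n) (U : 'M[R]_(l, p))
  (V : 'M[R]_(m, q)) (W : 'M[R]_(n, s)) :
  unfold3 (tmul A U V W) = W^T *m unfold3 (tmul12 A U V).
Proof.
apply/matrixP => k x; case/mxvec_indexP: x => i j.
rewrite unfold3E !mxE /tmul.
under [RHS]eq_bigr => c _ do rewrite mxE unfold3E /tmul12 mulr_sumr.
rewrite [RHS]exchange_big /=; apply: eq_bigr => a _.
under [RHS]eq_bigr => c _ do rewrite mulr_sumr.
rewrite [RHS]exchange_big /=; apply: eq_bigr => b _; apply: eq_bigr => c _.
by ring.
Qed.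

Lemma fnorm2_tr a b (M : 'M[R]_(a, b)) : fnorm2 M = \tr (M *m M^T).
Proof.
rewrite /fnorm2 /mxtrace; apply: eq_bigr => i _; rewrite mxE.
by apply: eq_bigr => j _; rewrite mxE expr2.
Qed.

Lemma key r l1 l p N (U0 : 'M[R]_(l, r)) (U0p : 'M[R]_(l, l1))
  (U1 : 'M[R]_(l, p)) (H : 'M[R]_(p, N)) (B : 'M[R]_(l, N)) :
  (r + l1 = l)%N ->
  U0^T *m U0 = 1%:M -> U0p^T *m U0p = 1%:M -> U0^T *m U0p = 0 -> U0^T *m U1 = 0 ->
  U1^T *m U1 = 1%:M -> (1%:M - U0 *m U0^T) *m B = U1 *m H ->
  fnorm2 ((U0p^T *m B) *m (U0^T *m B)^T) = fnorm2 ((U0^T *m B) *m (U1^T *m B)^T).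
Proof.
move=> e; subst l => h00 hpp h0p h01 h11 hB.
have P : U0p *m U0p^T = 1%:M - U0 *m U0^T.
  have QQ : (row_mx U0 U0p)^T *m (row_mx U0 U0p) = 1%:M.
    have hp0 : U0p^T *m U0 = 0 by rewrite -(trmxK U0) -trmx_mul h0p trmx0.
    rewrite tr_row_mx mul_col_row h00 hpp h0p hp0.
    by rewrite -scalar_mx_block.
  have := mulmx1C QQ; rewrite tr_row_mx mul_row_col => <-.
  by rewrite addrC addKr.
have h10 : U1^T *m U0 = 0 by rewrite -(trmxK U0) -trmx_mul h01 trmx0.
have hp0 : U0p^T *m U0 = 0 by rewrite -(trmxK U0) -trmx_mul h0p trmx0.
have E1 : U1^T *m B = H.
  have : U1^T *m ((1%:M - U0 *m U0^T) *m B) = H by rewrite hB mulmxA h11 mul1mx.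
  by rewrite mulmxA mulmxBr mulmx1 mulmxA h10 mul0mx subr0.
have E2 : U0p^T *m B = U0p^T *m U1 *m H.
  have : U0p^T *m ((1%:M - U0 *m U0^T) *m B) = U0p^T *m U1 *m H by rewrite hB mulmxA.
  by rewrite mulmxA mulmxBr mulmx1 mulmxA hp0 mul0mx subr0.
have E3 : U0p *m U0p^T *m U1 = U1.
  by rewrite P mulmxBl mul1mx -mulmxA h01 mulmx0 subr0.
have CC : (U0p^T *m U1)^T *m (U0p^T *m U1) = 1%:M.
  by rewrite trmx_mul trmxK !mulmxA -(mulmxA U1^T) -(mulmxA U1^T) E3 h11.
rewrite !fnorm2_tr E1 E2 -(mulmxA _ H).
set X := U0^T *m B.
rewrite (trmx_mul (U0p^T *m U1)).
set C := U0p^T *m U1 in CC *. set Y := H *m X^T.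
rewrite mulmxA mxtrace_mulC.
rewrite (mulmxA C^T) (mulmxA C^T C) CC mul1mx.
rewrite mxtrace_mulC /Y trmx_mul trmxK.
by rewrite [in RHS]trmx_mul trmxK.
Qed.
End T.
Arguments key {R r l1 l p N U0 U0p U1 H B}.

Theorem proposition4p2 (R : realFieldType) (l m n r1 r2 r3 : nat)
  (A : tensor R l m n)
  (U0 : 'M[R]_(l, r1)) (V0 : 'M[R]_(m, r2)) (W0 : 'M[R]_(n, r3))
  (p1 p2 p3 : nat)
  (U1 : 'M[R]_(l, p1)) (V1 : 'M[R]_(m, p2)) (W1 : 'M[R]_(n, p3))
  (HU : 'M[R]_(p1, r2 * r3)) (HV : 'M[R]_(p2, r1 * r3)) (HW : 'M[R]_(p3, r1 * r2))
  (l1 m1 n1 : nat)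
  (U0p : 'M[R]_(l, l1)) (V0p : 'M[R]_(m, m1)) (W0p : 'M[R]_(n, n1)) :
  orthonormal_cols U0 -> orthonormal_cols V0 -> orthonormal_cols W0 ->
  krylov_step1 A U0 V0 W0 U1 HU ->
  krylov_step2 A U0 V0 W0 V1 HV ->
  krylov_step3 A U0 V0 W0 W1 HW ->
  orth_complement U0 U0p -> orth_complement V0 V0p -> orth_complement W0 W0p ->
  let H0 := tmul A U0 V0 W0 in
  let H11 := tmul A U1 V0 W0 in
  let H21 := tmul A U0 V1 W0 in
  let H31 := tmul A U0 V0 W1 in
  grassmann_grad_sqnorm A U0 V0 W0 U0p V0p W0p =
  fnorm2 (pcontr1 H0 H11) + fnorm2 (pcontr2 H0 H21) + fnorm2 (pcontr3 H0 H31).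
Proof.
move=> hU hV hW [hU01 [hU1 _ eU]] [hV01 [hV1 _ eV]] [hW01 [hW1 _ eW]]
  [e1 _ oUp oUUp] [e2 _ oVp oVVp] [e3 _ oWp oWWp] H0 H11 H21 H31.
rewrite /grassmann_grad_sqnorm /H0 /H11 /H21 /H31 /=.
rewrite !pcontr1E !pcontr2E !pcontr3E !unfold1_tmul !unfold2_tmul !unfold3_tmul.
by rewrite (key e1 hU oUp oUUp hU01 hU1 eU) (key e2 hV oVp oVVp hV01 hV1 eV)
  (key e3 hW oWp oWWp hW01 hW1 eW).
Qed.
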